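(* Let $Q\in\mathbb{R}^{n\times n}$ be symmetric nonsingular with eigenvalues $\lambda_1\ge\dots\ge\lambda_{n-1}>0>\lambda_n$ and orthonormal eigenvectors $u_1,\dots,u_n$ ($Qu_i=\lambda_iu_i$), let $\mathcal{C_L}=\{x: x^TQx\le0,\ x^TQu_n\le0\}$, and let $A\in\mathbb{R}^{n\times n}$. Then $\mathcal{C_L}$ (equivalently, $-\mathcal{C_L}$) is an invariant set for the continuous system $\dot x(t)=Ax(t)$ (i.e., $e^{At}\mathcal{C_L}\subseteq\mathcal{C_L}$ for all $t\ge0$) if and only if there exists $\eta\in\mathbb{R}$ such that $A^TQ+QA-\eta Q\preceq0$.
   Context: $\preceq0$ denotes negative semidefiniteness. *)

(* Defs.v *)
(* real matrices are represented as functions nat -> nat -> R,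
   vectors as nat -> R; only indices < n are meaningful. *)
From Stdlib Require Import Reals Lra Lia Arith Factorial.
Open Scope R_scope.

Definition Vec := nat -> R.
Definition Mat := nat -> nat -> R.

Fixpoint rsum (n : nat) (f : nat -> R) : R :=
  match n with
  | O => 0
  | S m => rsum m f + f m
  end.

Definition dot (n : nat) (x y : Vec) : R := rsum n (fun i => x i * y i).
Definition mvec (n : nat) (A : Mat) (x : Vec) : Vec :=
  fun i => rsum n (fun k => A i k * x k).
Definition mmul (n : nat) (A B : Mat) : Mat :=
  fun i j => rsum n (fun k => A i k * B k j).
Definition trmx (A : Mat) : Mat := fun i j => A j i.
Definition madd (A B : Mat) : Mat := fun i j => A i j + B i j.
Definition mscale (c : R) (A : Mat) : Mat := fun i j => c * A i j.
Definition idmx : Mat := fun i j => if Nat.eqb i j then 1 else 0.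
Definition vopp (x : Vec) : Vec := fun i => - x i.

Definition quad (n : nat) (M : Mat) (x : Vec) : R := dot n x (mvec n M x).

Definition symmetric (n : nat) (M : Mat) : Prop :=
  forall i j, (i < n)%nat -> (j < n)%nat -> M i j = M j i.

Definition nonsingular (n : nat) (M : Mat) : Prop :=
  forall x : Vec, (forall i, (i < n)%nat -> mvec n M x i = 0) ->
                  forall i, (i < n)%nat -> x i = 0.

Definition nsd (n : nat) (M : Mat) : Prop := forall x : Vec, quad n M x <= 0.

Fixpoint mpow (n : nat) (A : Mat) (k : nat) : Mat :=
  match k with
  | O => idmx
  | S k' => mmul n A (mpow n A k')
  end.

Definition expm_partial (n : nat) (A : Mat) (t : R) (N : nat) : Mat :=
  fun i j => rsum (S N) (fun k => t ^ k / INR (Factorial.fact k) * mpow n A k i j).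

Definition is_expm (n : nat) (A : Mat) (t : R) (E : Mat) : Prop :=
  forall i j, (i < n)%nat -> (j < n)%nat ->
    Un_cv (fun N => expm_partial n A t N i j) (E i j).

Definition invariant_cont (n : nat) (A : Mat) (S : Vec -> Prop) : Prop :=
  forall t : R, 0 <= t -> forall E : Mat, is_expm n A t E ->
    forall x : Vec, S x -> S (mvec n E x).

Definition CL (n : nat) (Q : Mat) (un : Vec) (x : Vec) : Prop :=
  quad n Q x <= 0 /\ dot n x (mvec n Q un) <= 0.

(* Eigen-decomposition hypothesis (0-indexed): lam 0 >= ... >= lam (n-2) > 0 > lam (n-1),
   u 0, ..., u (n-1) orthonormal with Q u_i = lam_i u_i. *)
Definition lorentz_eigen (n : nat) (Q : Mat) (lam : nat -> R) (u : nat -> Vec) : Prop :=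
  (forall i j, (i < n)%nat -> (j < n)%nat ->
     dot n (u i) (u j) = if Nat.eqb i j then 1 else 0) /\
  (forall i k, (i < n)%nat -> (k < n)%nat -> mvec n Q (u i) k = lam i * u i k) /\
  (forall i, (S i < n)%nat -> lam (S i) <= lam i) /\
  (forall i, (i < n - 1)%nat -> 0 < lam i) /\
  lam (n - 1)%nat < 0.

(* Main.v *)
Require Import Defs.
From Stdlib Require Import Reals Lra Lia Arith Factorial.
From Stdlib Require Import Classical Psatz FunctionalExtensionality.
From Coquelicot Require Import Coquelicot.
From mathcomp Require all_boot all_algebra Rstruct.
Open Scope R_scope.

Module MC.
Import all_boot all_algebra Rstruct.
Open Scope R_scope.


Lemma rsum_big n (f : nat -> R) : rsum n f = (\sum_(i < n) f i)%R.
Proof.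
 elim: n => [|n IH]; first by rewrite big_ord0.
 by rewrite big_ord_recr /= IH.
Qed.

Lemma ortho_complete n (u : nat -> Vec) :
  (forall i j, Peano.lt i n -> Peano.lt j n -> dot n (u i) (u j) = if Nat.eqb i j then 1 else 0) ->
  forall j k, Peano.lt j n -> Peano.lt k n -> rsum n (fun i => u i j * u i k) = if Nat.eqb j k then 1 else 0.
Proof.
 move=> H j k /ltP Hj /ltP Hk.
 pose U : 'M[R]_n := (\matrix_(i, l) u i l)%R.
 have E : (U *m U^T)%R = 1%:M%R.
 { apply/matrixP => i l. rewrite !mxE.
   rewrite (eq_bigr (fun m : 'I_n => u i m * u l m)); last first.
   { move=> m _. by rewrite !mxE. }
   rewrite -(rsum_big n (fun m => u i m * u l m)).
   have := H i l (elimT ltP (ltn_ord i)) (elimT ltP (ltn_ord l)). rewrite /dot => ->.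
   case: (Nat.eqb_spec i l) => [Heq | Hne].
   { have -> : i == l by apply/eqP; apply: val_inj. by []. }
   case: eqP => [Heq|//]. by rewrite Heq in Hne. }
 have E2 := mulmx1C E.
 move/matrixP: E2 => /(_ (Ordinal Hj) (Ordinal Hk)). rewrite !mxE.
 rewrite (eq_bigr (fun m : 'I_n => u m j * u m k)); last first.
 { move=> m _. by rewrite !mxE. }
 rewrite -(rsum_big n (fun m => u m j * u m k)) => ->.
 case: (Nat.eqb_spec j k) => [Heq | Hne].
 - subst. have -> : Ordinal Hj == Ordinal Hk by apply/eqP; apply: val_inj.
   by [].
 - case: eqP => [Heq|//]. case: Heq => Heq. by [].
Qed.

End MC.



Lemma rsum_ext n f g : (forall i, (i < n)%nat -> f i = g i) -> rsum n f = rsum n g.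
Proof. induction n; simpl; intros H; auto. rewrite IHn by (intros; apply H; lia). rewrite H by lia. auto. Qed.

Lemma rsum_plus n f g : rsum n (fun i => f i + g i) = rsum n f + rsum n g.
Proof. induction n; simpl; [lra|]. rewrite IHn. lra. Qed.

Lemma rsum_scal n c f : rsum n (fun i => c * f i) = c * rsum n f.
Proof. induction n; simpl; [lra|]. rewrite IHn. lra. Qed.

Lemma rsum_scal_r n c f : rsum n (fun i => f i * c) = rsum n f * c.
Proof. induction n; simpl; [lra|]. rewrite IHn. lra. Qed.

Lemma rsum_zero n f : (forall i, (i < n)%nat -> f i = 0) -> rsum n f = 0.
Proof. intros H. rewrite (rsum_ext n f (fun _ => 0)) by auto. induction n; simpl; auto; rewrite IHn; [lra| intros; apply H; lia]. Qed.

Lemma rsum_swap n m f : rsum n (fun i => rsum m (fun j => f i j)) = rsum m (fun j => rsum n (fun i => f i j)).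
Proof. induction n; simpl. { symmetry; apply rsum_zero; auto. }
 rewrite IHn. rewrite <- rsum_plus. auto. Qed.

Lemma rsum_le n f g : (forall i, (i < n)%nat -> f i <= g i) -> rsum n f <= rsum n g.
Proof. induction n; simpl; intros H; [lra|]. pose proof (H n ltac:(lia)). pose proof (IHn ltac:(intros; apply H; lia)). lra. Qed.

Lemma rsum_nonneg n f : (forall i, (i < n)%nat -> 0 <= f i) -> 0 <= rsum n f.
Proof. intros H. replace 0 with (rsum n (fun _ => 0)). apply rsum_le; auto. apply rsum_zero; auto. Qed.

Lemma rsum_abs n f : Rabs (rsum n f) <= rsum n (fun i => Rabs (f i)).
Proof. induction n; simpl. rewrite Rabs_R0; lra. eapply Rle_trans. apply Rabs_triang. lra. Qed.

Lemma rsum_delta n f j : (j < n)%nat -> rsum n (fun k => f k * idmx k j) = f j.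
Proof. induction n; intros H; simpl; [lia|]. unfold idmx at 2.
 destruct (Nat.eq_dec j n).
 - subst. rewrite Nat.eqb_refl. rewrite rsum_zero. lra. intros i Hi. unfold idmx.
   destruct (Nat.eqb_spec i n); [lia|lra].
 - destruct (Nat.eqb_spec n j); [lia|]. rewrite IHn by lia. lra. Qed.

Lemma rsum_term n f i : (i < n)%nat -> (forall k, (k < n)%nat -> 0 <= f k) -> f i <= rsum n f.
Proof. induction n; intros Hi H; simpl; [lia|].
 destruct (Nat.eq_dec i n). subst. pose proof (rsum_nonneg n f ltac:(intros; apply H; lia)). lra.
 pose proof (IHn ltac:(lia) ltac:(intros; apply H; lia)). pose proof (H n ltac:(lia)). lra. Qed.

Lemma rsum_sum_f n f : rsum (S n) f = sum_f_R0 f n.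
Proof. induction n; simpl. lra. simpl in IHn. rewrite <- IHn. auto. Qed.

Lemma mvec_ext n M x y : (forall i, (i < n)%nat -> x i = y i) -> forall i, mvec n M x i = mvec n M y i.
Proof. intros H i. unfold mvec. apply rsum_ext. intros; rewrite H; auto. Qed.

Lemma dot_ext n x x' y y' : (forall i, (i < n)%nat -> x i = x' i) -> (forall i, (i < n)%nat -> y i = y' i) -> dot n x y = dot n x' y'.
Proof. intros H1 H2. unfold dot. apply rsum_ext. intros; rewrite H1, H2; auto. Qed.

Lemma quad_ext n M x y : (forall i, (i < n)%nat -> x i = y i) -> quad n M x = quad n M y.
Proof. intros H. unfold quad. apply dot_ext; auto. intros; apply mvec_ext; auto. Qed.

Lemma mvec_mmul n A B x i : mvec n (mmul n A B) x i = mvec n A (mvec n B x) i.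
Proof. unfold mvec, mmul. transitivity (rsum n (fun k => rsum n (fun j => A i j * B j k * x k))).
 apply rsum_ext; intros. rewrite <- rsum_scal_r. auto.
 rewrite rsum_swap. apply rsum_ext; intros. rewrite <- rsum_scal. apply rsum_ext; intros. ring. Qed.

Lemma dot_trmx n A y z : dot n y (mvec n (trmx A) z) = dot n (mvec n A y) z.
Proof. unfold dot, mvec, trmx. transitivity (rsum n (fun i => rsum n (fun k => A k i * y i * z k))).
 apply rsum_ext; intros. rewrite <- rsum_scal. apply rsum_ext; intros; ring.
 rewrite rsum_swap. apply rsum_ext; intros. rewrite <- rsum_scal_r. apply rsum_ext; intros; ring. Qed.

Lemma dot_plus_l n x y z : dot n (fun i => x i + y i) z = dot n x z + dot n y z.
Proof. unfold dot. rewrite <- rsum_plus. apply rsum_ext; intros; ring. Qed.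
Lemma dot_scal_l n c x z : dot n (fun i => c * x i) z = c * dot n x z.
Proof. unfold dot. rewrite <- rsum_scal. apply rsum_ext; intros; ring. Qed.
Lemma dot_comm n x y : dot n x y = dot n y x.
Proof. unfold dot. apply rsum_ext; intros; ring. Qed.
Lemma mvec_plus n M x y i : mvec n M (fun j => x j + y j) i = mvec n M x i + mvec n M y i.
Proof. unfold mvec. rewrite <- rsum_plus. apply rsum_ext; intros; ring. Qed.
Lemma mvec_scal n M c x i : mvec n M (fun j => c * x j) i = c * mvec n M x i.
Proof. unfold mvec. rewrite <- rsum_scal. apply rsum_ext; intros; ring. Qed.

Lemma quad_madd n M N x : quad n (madd M N) x = quad n M x + quad n N x.
Proof. unfold quad, dot, mvec, madd. rewrite <- rsum_plus. apply rsum_ext; intros.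
 rewrite <- Rmult_plus_distr_l, <- rsum_plus. f_equal. apply rsum_ext; intros; ring. Qed.
Lemma quad_mscale n c M x : quad n (mscale c M) x = c * quad n M x.
Proof. unfold quad, dot, mvec, mscale. rewrite <- rsum_scal. apply rsum_ext; intros.
 rewrite <- rsum_scal. rewrite <- rsum_scal, <- rsum_scal. apply rsum_ext; intros; ring. Qed.

Definition bil n M x y := dot n x (mvec n M y).

Lemma quad_lin n M x y t : quad n M (fun i => x i + t * y i) = quad n M x + t * (bil n M x y + bil n M y x) + t^2 * quad n M y.
Proof. unfold quad, bil.
 rewrite (dot_ext n (fun i => x i + t * y i) (fun i => x i + t * y i) (mvec n M (fun i => x i + t * y i)) (fun i => mvec n M x i + t * mvec n M y i)); auto.
 2:{ intros. rewrite mvec_plus, mvec_scal. auto. }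
 rewrite dot_plus_l, dot_scal_l. rewrite !(dot_comm n x), !(dot_comm n y). rewrite dot_plus_l, dot_scal_l.
 rewrite dot_plus_l, dot_scal_l. ring. Qed.
Lemma two_d qx qy bq mx my bm : qx > 0 -> qy < 0 ->
  (forall t, qx + t*bq + t^2*qy = 0 -> mx + t*bm + t^2*my <= 0) -> mx * qy >= my * qx.
Proof.
 intros Hx Hy H.
 set (D := bq^2 - 4*qx*qy).
 assert (HD : 0 < D) by (unfold D; nra).
 set (s := sqrt D).
 assert (Hs : s * s = D) by (apply sqrt_sqrt; lra).
 assert (Hs0 : 0 <= s) by apply sqrt_pos.
 assert (Hsb : bq * bq < s * s) by (rewrite Hs; unfold D; nra).
 assert (Hab : bq < s /\ - bq < s) by (split; nra).
 set (t1 := (bq + s)/(-2*qy)). set (t2 := (bq - s)/(-2*qy)).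
 assert (H1 : mx + t1*bm + t1^2*my <= 0).
 { apply H. unfold t1. field_simplify; [|lra]. replace (s^2) with D by (rewrite <- Hs; ring). unfold D. field. lra. }
 assert (H2 : mx + t2*bm + t2^2*my <= 0).
 { apply H. unfold t2. field_simplify; [|lra]. replace (s^2) with D by (rewrite <- Hs; ring). unfold D. field. lra. }
 assert (Ht1 : t1 > 0) by (unfold t1; apply Rdiv_lt_0_compat; lra).
 assert (Ht2 : t2 < 0).
 { unfold t2. replace ((bq - s) / (-2*qy)) with (- ((s - bq) / (-2*qy))) by (field; lra).
   assert (0 < (s - bq) / (-2*qy)) by (apply Rdiv_lt_0_compat; lra). lra. }
 assert (Hp : t1 * t2 = qx / qy).
 { unfold t1, t2. field_simplify; [|lra|lra]. replace (s^2) with D by (rewrite <- Hs; ring). unfold D. field. lra. }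
 assert (Hc : t2 * (mx + t1*bm + t1^2*my) - t1 * (mx + t2*bm + t2^2*my) = (t2 - t1) * (mx - my * (t1*t2))) by ring.
 assert (Hk : mx - my * (qx/qy) <= 0).
 { rewrite <- Hp. assert (0 <= (t2 - t1) * (mx - my * (t1 * t2))) by (rewrite <- Hc; nra). nra. }
 assert (mx * qy - my * qx = (mx - my * (qx/qy)) * qy) by (field; lra). nra.
Qed.

Lemma ratio_le n (Q M : Mat) x y : quad n Q x > 0 -> quad n Q y < 0 ->
  (forall z, quad n Q z = 0 -> quad n M z <= 0) ->
  quad n M x / quad n Q x <= quad n M y / quad n Q y.
Proof.
 intros Hx Hy H.
 assert (K : quad n M x * quad n Q y >= quad n M y * quad n Q x).
 { apply (two_d _ _ (bil n Q x y + bil n Q y x) _ _ (bil n M x y + bil n M y x)); auto.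
   intros t Ht. rewrite <- quad_lin. apply H. rewrite quad_lin. lra. }
 set (a := quad n M x) in *. set (b := quad n Q x) in *. set (c := quad n M y) in *. set (d := quad n Q y) in *.
 apply Rmult_le_reg_r with (-(b*d)). nra.
 replace (a / b * - (b * d)) with (- (a * d)) by (field; lra).
 replace (c / d * - (b * d)) with (- (c * b)) by (field; lra). lra.
Qed.

Lemma slemma n (Q M : Mat) y0 :
  quad n Q y0 < 0 ->
  (forall x, quad n Q x = 0 -> quad n M x <= 0) ->
  (n = 1%nat \/ exists x0, quad n Q x0 > 0) ->
  exists eta, forall x, quad n M x - eta * quad n Q x <= 0.
Proof.
 intros Hy0 H [Hn | [x0 Hx0]].
 - subst n. unfold quad, dot, mvec in *. simpl in *.
   exists (M 0%nat 0%nat / Q 0%nat 0%nat). intros x.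
   assert (Q 0%nat 0%nat <> 0) by (intro E; rewrite E in Hy0; lra).
   replace (0 + x 0%nat * (0 + M 0%nat 0%nat * x 0%nat) - M 0%nat 0%nat / Q 0%nat 0%nat * (0 + x 0%nat * (0 + Q 0%nat 0%nat * x 0%nat))) with 0 by (field; auto). lra.
 - set (Z := fun r => forall y, quad n Q y < 0 -> r <= quad n M y / quad n Q y).
   assert (Hb : bound Z). { exists (quad n M y0 / quad n Q y0). intros r Hr. apply Hr; auto. }
   assert (Hne : exists r, Z r). { exists (quad n M x0 / quad n Q x0). intros y Hy. apply ratio_le; auto. }
   destruct (completeness Z Hb Hne) as [eta [Hub Hlub]].
   exists eta. intros x.
   destruct (Rtotal_order (quad n Q x) 0) as [Hl | [He | Hg]].
   + assert (eta <= quad n M x / quad n Q x). { apply Hlub. intros r Hr. apply Hr; auto. }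
     apply Rmult_le_compat_neg_l with (r := quad n Q x) in H0; [|lra].
     replace (quad n Q x * (quad n M x / quad n Q x)) with (quad n M x) in H0 by (field; lra). lra.
   + rewrite He. specialize (H x He). lra.
   + assert (quad n M x / quad n Q x <= eta). { apply Hub. intros y Hy. apply ratio_le; auto. }
     apply Rmult_le_compat_l with (r := quad n Q x) in H0; [|lra].
     replace (quad n Q x * (quad n M x / quad n Q x)) with (quad n M x) in H0 by (field; lra). lra.
Qed.

Lemma rsum_nonneg_zero n f : (forall i, (i < n)%nat -> 0 <= f i) -> rsum n f <= 0 -> forall i, (i < n)%nat -> f i = 0.
Proof. intros H1 H2 i Hi. pose proof (rsum_term n f i Hi H1). pose proof (H1 i Hi). lra. Qed.

Lemma mvec_rsum n M (c : nat -> R) (w : nat -> Vec) k :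
  mvec n M (fun l => rsum n (fun i => c i * w i l)) k = rsum n (fun i => c i * mvec n M (w i) k).
Proof. unfold mvec. transitivity (rsum n (fun l => rsum n (fun i => c i * (M k l * w i l)))).
 apply rsum_ext; intros. rewrite <- rsum_scal. apply rsum_ext; intros; ring.
 rewrite rsum_swap. apply rsum_ext; intros. rewrite <- rsum_scal. auto. Qed.

Section Eigen.
Variables (n : nat) (Q : Mat) (lam : nat -> R) (u : nat -> Vec).
Hypothesis HE : lorentz_eigen n Q lam u.

Lemma eig_complete z k : (k < n)%nat -> z k = rsum n (fun i => dot n z (u i) * u i k).
Proof. intros Hk. destruct HE as [Ho _].
 pose proof (MC.ortho_complete n u Ho) as Hc.
 unfold dot. transitivity (rsum n (fun j => z j * rsum n (fun i => u i j * u i k))).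
 - rewrite (rsum_ext n _ (fun j => z j * idmx j k)). rewrite rsum_delta; auto.
   intros. rewrite Hc; auto. unfold idmx. auto.
 - transitivity (rsum n (fun j => rsum n (fun i => z j * u i j * u i k))).
   apply rsum_ext; intros. rewrite <- rsum_scal. apply rsum_ext; intros; ring.
   rewrite rsum_swap. apply rsum_ext; intros. rewrite <- rsum_scal_r. auto.
Qed.

Lemma dot_Qu z i : (i < n)%nat -> dot n z (mvec n Q (u i)) = lam i * dot n z (u i).
Proof. intros Hi. destruct HE as [_ [Hq _]]. unfold dot. rewrite <- rsum_scal. apply rsum_ext; intros.
 rewrite Hq; auto. ring. Qed.

Lemma quad_eig z : quad n Q z = rsum n (fun i => lam i * (dot n z (u i))^2).
Proof. destruct HE as [_ [Hq _]]. unfold quad.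
 rewrite (dot_ext n z z (mvec n Q z) (fun k => rsum n (fun i => dot n z (u i) * (lam i * u i k)))); auto.
 - unfold dot at 1. transitivity (rsum n (fun k => rsum n (fun i => dot n z (u i) * lam i * (z k * u i k)))).
   apply rsum_ext; intros. rewrite <- rsum_scal. apply rsum_ext; intros; ring.
   rewrite rsum_swap. apply rsum_ext; intros. rewrite rsum_scal. unfold dot. ring.
 - intros k Hk. rewrite (mvec_ext n Q z (fun l => rsum n (fun i => dot n z (u i) * u i l))).
   rewrite mvec_rsum. apply rsum_ext; intros. rewrite Hq; auto.
   intros; apply eig_complete; auto.
Qed.

Lemma key_lemma z : (1 <= n)%nat -> quad n Q z <= 0 -> dot n z (mvec n Q (u (n-1)%nat)) = 0 ->
  forall k, (k < n)%nat -> z k = 0.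
Proof. intros Hn Hq Hd k Hk.
 pose proof HE as [_ [_ [_ [Hpos Hneg]]]].
 rewrite dot_Qu in Hd by lia.
 assert (Hc : dot n z (u (n-1)%nat) = 0). { apply Rmult_integral in Hd. destruct Hd; auto. lra. }
 rewrite quad_eig in Hq.
 assert (Hz : forall i, (i < n)%nat -> lam i * dot n z (u i) ^ 2 = 0).
 { apply rsum_nonneg_zero; auto. intros i Hi. destruct (Nat.eq_dec i (n-1)).
   subst. rewrite Hc. lra. pose proof (Hpos i ltac:(lia)). apply Rmult_le_pos; [lra|]. apply pow2_ge_0. }
 rewrite eig_complete by auto. apply rsum_zero. intros i Hi.
 destruct (Nat.eq_dec i (n-1)). subst. rewrite Hc; ring.
 pose proof (Hz i Hi). pose proof (Hpos i ltac:(lia)).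
 assert (dot n z (u i) ^ 2 = 0). { apply Rmult_integral in H. destruct H; auto. lra. }
 assert (dot n z (u i) = 0) by nra.
 rewrite H2; ring.
Qed.

Lemma quad_u i : (i < n)%nat -> quad n Q (u i) = lam i.
Proof. intros Hi. unfold quad. rewrite dot_Qu by auto. destruct HE as [Ho _]. rewrite Ho by auto.
 rewrite Nat.eqb_refl. ring. Qed.

End Eigen.

Lemma is_series_zero : is_series (fun _ : nat => 0) 0.
Proof.
 assert (H := is_series_scal_r 0 _ _ (is_series_geom 0 ltac:(rewrite Rabs_R0; lra))).
 assert (E : / (1 - 0) * 0 = 0) by ring. rewrite E in H.
 eapply is_series_ext; [|exact H]. intros; simpl; ring.
Qed.

Lemma is_series_scal_R (c : R) (a : nat -> R) (l : R) : is_series a l -> is_series (fun k => c * a k) (c * l).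
Proof. intros H. exact (is_series_scal (K:=R_AbsRing) (V:=R_NormedModule) c a l H). Qed.

Lemma is_series_rsum n (f : nat -> nat -> R) (l : nat -> R) :
  (forall j, (j < n)%nat -> is_series (f j) (l j)) ->
  is_series (fun k => rsum n (fun j => f j k)) (rsum n l).
Proof. induction n; intros H; simpl.
 - apply is_series_zero.
 - apply (is_series_plus (fun k => rsum n (fun j => f j k)) (f n)).
   apply IHn; intros; apply H; lia. apply H; lia.
Qed.

Lemma is_derive_rsum n (f : nat -> R -> R) (df : nat -> R) t :
  (forall j, (j < n)%nat -> is_derive (f j) t (df j)) ->
  is_derive (fun s => rsum n (fun j => f j s)) t (rsum n df).
Proof. induction n; intros H; simpl.
 - apply (is_derive_const (K := R_AbsRing) (0:R) t).
 - apply (is_derive_plus (fun s => rsum n (fun j => f j s)) (f n)).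
   apply IHn; intros; apply H; lia. apply H; lia.
Qed.

Lemma der_mult (f g : R -> R) (x df dg : R) : is_derive f x df -> is_derive g x dg ->
  is_derive (fun t => f t * g t) x (df * g x + f x * dg).
Proof. intros. apply (is_derive_mult f g x df dg); auto. intros; apply Rmult_comm. Qed.

Lemma der_eq (f : R -> R) (x d d' : R) : is_derive f x d -> d = d' -> is_derive f x d'.
Proof. intros H ->; auto. Qed.

Fixpoint itv (n : nat) (A : Mat) (x : Vec) (k : nat) : Vec :=
  match k with O => x | S k' => mvec n A (itv n A x k') end.

Definition coef n A x i k := itv n A x k i / INR (fact k).
Definition ysol n A x i t := PSeries (coef n A x i) t.

Lemma itv_mpow n A x k i : (i < n)%nat -> mvec n (mpow n A k) x i = itv n A x k i.
Proof. revert i. induction k; intros i Hi; simpl.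
 - unfold mvec. rewrite (rsum_ext n _ (fun l => x l * idmx l i)). apply rsum_delta; auto.
   intros l Hl. unfold idmx. rewrite Nat.eqb_sym. ring.
 - rewrite mvec_mmul. apply mvec_ext. intros; apply IHk; auto.
Qed.

Definition nrm1 n (v : Vec) := rsum n (fun j => Rabs (v j)).
Definition Ka n (A : Mat) := rsum n (fun i => rsum n (fun j => Rabs (A i j))).

Lemma nrm1_pos n v : 0 <= nrm1 n v.
Proof. apply rsum_nonneg; intros; apply Rabs_pos. Qed.
Lemma Ka_pos n A : 0 <= Ka n A.
Proof. apply rsum_nonneg; intros; apply rsum_nonneg; intros; apply Rabs_pos. Qed.
Lemma comp_le_nrm1 n v i : (i < n)%nat -> Rabs (v i) <= nrm1 n v.
Proof. intros Hi. apply (rsum_term n (fun j => Rabs (v j))); auto. intros; apply Rabs_pos. Qed.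

Lemma nrm1_mvec n A v : nrm1 n (mvec n A v) <= Ka n A * nrm1 n v.
Proof. unfold nrm1 at 1, Ka. rewrite <- rsum_scal_r. apply rsum_le. intros i Hi.
 unfold mvec. eapply Rle_trans. apply rsum_abs. rewrite <- rsum_scal_r. apply rsum_le. intros j Hj.
 rewrite Rabs_mult. apply Rmult_le_compat_l. apply Rabs_pos. apply comp_le_nrm1; auto. Qed.

Lemma nrm1_itv n A x k : nrm1 n (itv n A x k) <= Ka n A ^ k * nrm1 n x.
Proof. induction k; simpl. lra. eapply Rle_trans. apply nrm1_mvec.
 rewrite Rmult_assoc. apply Rmult_le_compat_l; auto. apply Ka_pos. Qed.

Lemma sum_f_term f N k : (k <= N)%nat -> (forall j, 0 <= f j) -> f k <= sum_f_R0 f N.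
Proof. intros Hk H. rewrite <- rsum_sum_f. apply (rsum_term (S N) f k); auto. lia. Qed.

Lemma powfact_bound c : exists B, forall k, c ^ k / INR (fact k) <= B.
Proof. destruct (cv_speed_pow_fact c 1 ltac:(lra)) as [N HN].
 exists (1 + sum_f_R0 (fun k => Rabs (c ^ k / INR (fact k))) N). intros k.
 assert (0 <= sum_f_R0 (fun k => Rabs (c ^ k / INR (fact k))) N).
 { rewrite <- rsum_sum_f. apply rsum_nonneg; intros; apply Rabs_pos. }
 destruct (le_lt_dec k N).
 - pose proof (sum_f_term (fun k => Rabs (c ^ k / INR (fact k))) N k l ltac:(intros; apply Rabs_pos)).
   simpl in H0. pose proof (Rle_abs (c ^ k / INR (fact k))). lra.
 - specialize (HN k ltac:(lia)). unfold R_dist in HN. rewrite Rminus_0_r in HN.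
   pose proof (Rle_abs (c ^ k / INR (fact k))). lra.
Qed.

Lemma coef_radius n A x i t : (i < n)%nat -> Rbar_lt (Rabs t) (CV_radius (coef n A x i)).
Proof. intros Hi. destruct (CV_radius_bounded (coef n A x i)) as [Hub _].
 assert (Hin : Rbar_le (Rabs t + 1) (CV_radius (coef n A x i))).
 { apply Hub. destruct (powfact_bound (Ka n A * (Rabs t + 1))) as [B HB].
   exists (nrm1 n x * B). intros k. unfold coef.
   rewrite Rabs_mult. unfold Rdiv. rewrite Rabs_mult.
   rewrite (Rabs_inv (INR (fact k))). rewrite (Rabs_pos_eq (INR (fact k))) by apply pos_INR.
   rewrite (Rabs_pos_eq ((Rabs t + 1) ^ k)) by (apply pow_le; pose proof (Rabs_pos t); lra).
   specialize (HB k). rewrite Rpow_mult_distr in HB.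
   assert (H1 : Rabs (itv n A x k i) <= Ka n A ^ k * nrm1 n x).
   { eapply Rle_trans. apply (comp_le_nrm1 n); auto. apply nrm1_itv. }
   assert (H2 : 0 < / INR (fact k)) by (apply Rinv_0_lt_compat, INR_fact_lt_0).
   assert (H3 : 0 <= (Rabs t + 1) ^ k) by (apply pow_le; pose proof (Rabs_pos t); lra).
   apply Rle_trans with (Ka n A ^ k * nrm1 n x * / INR (fact k) * (Rabs t + 1) ^ k).
   { apply Rmult_le_compat_r; auto. apply Rmult_le_compat_r; lra. }
   replace (Ka n A ^ k * nrm1 n x * / INR (fact k) * (Rabs t + 1) ^ k) with
     (nrm1 n x * (Ka n A ^ k * (Rabs t + 1) ^ k / INR (fact k))) by (unfold Rdiv; ring).
   apply Rmult_le_compat_l. apply nrm1_pos. auto. }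
 destruct (CV_radius (coef n A x i)) as [r| |]; simpl in *; auto; lra.
Qed.

Lemma ysol_series n A x i t : (i < n)%nat -> is_series (fun k => coef n A x i k * t ^ k) (ysol n A x i t).
Proof. intros Hi. unfold ysol, PSeries. apply Series_correct.
 apply ex_pseries_R. apply CV_radius_inside. apply coef_radius; auto. Qed.

Lemma ysol_0 n A x i : ysol n A x i 0 = x i.
Proof. unfold ysol. rewrite PSeries_0. unfold coef. simpl. field. Qed.

Lemma coef_deriv n A x i k : PS_derive (coef n A x i) k = rsum n (fun j => A i j * coef n A x j k).
Proof. unfold PS_derive, coef. simpl itv. unfold mvec. rewrite fact_simpl. rewrite mult_INR.
 unfold Rdiv.
 transitivity (rsum n (fun j => A i j * itv n A x k j) * / INR (fact k)).
 field. split. apply INR_fact_neq_0. apply not_0_INR. lia.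
 rewrite <- rsum_scal_r. apply rsum_ext; intros; ring. Qed.

Lemma ysol_derive n A x i t : (i < n)%nat ->
  is_derive (ysol n A x i) t (rsum n (fun j => A i j * ysol n A x j t)).
Proof. intros Hi. eapply der_eq. apply is_derive_PSeries. apply coef_radius; auto.
 unfold PSeries. apply is_series_unique.
 eapply is_series_ext.
 2:{ apply (is_series_rsum n (fun j k => A i j * (coef n A x j k * t ^ k))). intros j Hj.
     apply (is_series_scal_R (A i j)). apply ysol_series; auto. }
 intros k. simpl. rewrite coef_deriv. rewrite <- rsum_scal_r. apply rsum_ext; intros; ring.
Qed.

Lemma Un_cv_const c : Un_cv (fun _ => c) c.
Proof. intros eps He. exists 0%nat. intros. unfold R_dist. rewrite Rminus_diag, Rabs_R0. auto. Qed.

Lemma Un_cv_rsum n (f : nat -> nat -> R) (l : nat -> R) :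
  (forall j, (j < n)%nat -> Un_cv (f j) (l j)) -> Un_cv (fun N => rsum n (fun j => f j N)) (rsum n l).
Proof. induction n; intros H; simpl. apply Un_cv_const.
 apply CV_plus. apply IHn; intros; apply H; lia. apply H; lia. Qed.

Lemma ysol_cv n A x i t : (i < n)%nat -> Un_cv (fun N => sum_f_R0 (fun k => coef n A x i k * t ^ k) N) (ysol n A x i t).
Proof. intros Hi. pose proof (ysol_series n A x i t Hi) as H. apply is_series_Reals in H. exact H. Qed.

Lemma partial_eq n A x t N i : (i < n)%nat ->
  rsum (S N) (fun k => t ^ k / INR (fact k) * mvec n (mpow n A k) x i) = sum_f_R0 (fun k => coef n A x i k * t ^ k) N.
Proof. intros Hi. rewrite <- rsum_sum_f. apply rsum_ext. intros k _. rewrite itv_mpow by auto. unfold coef, Rdiv. ring. Qed.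

Lemma expm_link n A t E x i : is_expm n A t E -> (i < n)%nat -> mvec n E x i = ysol n A x i t.
Proof. intros HE Hi.
 assert (H1 : Un_cv (fun N => rsum n (fun j => expm_partial n A t N i j * x j)) (mvec n E x i)).
 { unfold mvec. apply (Un_cv_rsum n (fun j N => expm_partial n A t N i j * x j)). intros j Hj.
   apply CV_mult. apply HE; auto. apply Un_cv_const. }
 eapply UL_sequence. exact H1.
 eapply Un_cv_ext. 2: apply (ysol_cv n A x i t Hi).
 intros N. simpl. rewrite <- partial_eq by auto. unfold expm_partial, mvec.
 transitivity (rsum (S N) (fun k => rsum n (fun j => t ^ k / INR (fact k) * mpow n A k i j * x j))).
 - apply rsum_ext; intros. rewrite <- rsum_scal. apply rsum_ext; intros; ring.
 - rewrite <- rsum_swap. apply rsum_ext; intros. rewrite <- rsum_scal_r. auto.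
Qed.

Lemma expm_exists n A t : exists E, is_expm n A t E.
Proof. exists (fun i j => ysol n A (fun l => idmx l j) i t). intros i j Hi Hj.
 eapply Un_cv_ext. 2: apply ysol_cv; auto.
 intros N. simpl. rewrite <- partial_eq by auto. unfold expm_partial.
 apply rsum_ext; intros. unfold mvec. rewrite rsum_delta; auto.
Qed.

Lemma deriv_cont (g : R -> R) s d : is_derive g s d -> continuity_pt g s.
Proof. intros H. apply is_derive_Reals in H. apply derivable_continuous_pt. exists d. exact H. Qed.

Lemma mono_le (g dg : R -> R) a b : a <= b -> (forall s, is_derive g s (dg s)) ->
  (forall s, a <= s <= b -> dg s <= 0) -> g b <= g a.
Proof. intros Hab Hd Hs.
 destruct (MVT_gen g a b dg) as [c [Hc Heq]].
 - intros; apply Hd.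
 - intros; eapply deriv_cont; apply Hd.
 - rewrite Rmin_left in Hc by auto. rewrite Rmax_right in Hc by auto.
   specialize (Hs c Hc). nra.
Qed.

Lemma mono_ge (g dg : R -> R) a b : a <= b -> (forall s, is_derive g s (dg s)) ->
  (forall s, a <= s <= b -> 0 <= dg s) -> g a <= g b.
Proof. intros Hab Hd Hs.
 assert (H := mono_le (fun s => - g s) (fun s => - dg s) a b Hab).
 cut (- g b <= - g a). lra. apply H.
 - intros s. apply (is_derive_opp g s (dg s)). apply Hd.
 - intros s Hs'. specialize (Hs s Hs'). lra.
Qed.

Lemma dot_derive n (Y Z : R -> Vec) (dY dZ : Vec) t :
  (forall i, (i < n)%nat -> is_derive (fun s => Y s i) t (dY i)) ->
  (forall i, (i < n)%nat -> is_derive (fun s => Z s i) t (dZ i)) ->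
  is_derive (fun s => dot n (Y s) (Z s)) t (dot n dY (Z t) + dot n (Y t) dZ).
Proof. intros H1 H2. unfold dot. rewrite <- rsum_plus.
 apply (is_derive_rsum n (fun j s => Y s j * Z s j)). intros j Hj.
 apply der_mult; auto.
Qed.

Lemma mvec_derive n M (Y : R -> Vec) (dY : Vec) t :
  (forall i, (i < n)%nat -> is_derive (fun s => Y s i) t (dY i)) ->
  forall k, is_derive (fun s => mvec n M (Y s) k) t (mvec n M dY k).
Proof. intros H k. unfold mvec. apply (is_derive_rsum n (fun j s => M k j * Y s j)). intros j Hj.
 apply is_derive_scal. auto. Qed.

Definition Ysol n A x (s : R) : Vec := fun j => ysol n A x j s.

Lemma Ysol_derive n A x t : forall i, (i < n)%nat -> is_derive (fun s => Ysol n A x s i) t (mvec n A (Ysol n A x t) i).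
Proof. intros i Hi. unfold Ysol, mvec. apply ysol_derive; auto. Qed.

Definition Mdot n A Q := madd (mmul n (trmx A) Q) (mmul n Q A).

Lemma quad_derive n A Q x t :
  is_derive (fun s => quad n Q (Ysol n A x s)) t (quad n (Mdot n A Q) (Ysol n A x t)).
Proof. unfold quad at 1. eapply der_eq.
 apply dot_derive. apply Ysol_derive. intros i _. apply mvec_derive. apply Ysol_derive.
 unfold Mdot. rewrite quad_madd. unfold quad. f_equal.
 - rewrite (dot_ext n _ _ (mvec n (mmul n (trmx A) Q) _) (mvec n (trmx A) (mvec n Q (Ysol n A x t)))) by (intros; auto; apply mvec_mmul).
   rewrite dot_trmx. auto.
 - apply dot_ext; auto. intros; rewrite mvec_mmul; auto.
Qed.

Lemma norm_derive n A x t :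
  is_derive (fun s => dot n (Ysol n A x s) (Ysol n A x s)) t (2 * dot n (mvec n A (Ysol n A x t)) (Ysol n A x t)).
Proof. eapply der_eq. apply dot_derive; apply Ysol_derive. rewrite (dot_comm n (Ysol n A x t)). ring. Qed.

Lemma dot_A_bound n A v : Rabs (dot n (mvec n A v) v) <= Ka n A * dot n v v.
Proof. unfold dot, mvec, Ka. eapply Rle_trans. apply rsum_abs. rewrite <- rsum_scal_r. apply rsum_le. intros i Hi.
 rewrite Rabs_mult. rewrite Rmult_comm. eapply Rle_trans. apply Rmult_le_compat_l. apply Rabs_pos. apply rsum_abs.
 rewrite <- rsum_scal. rewrite <- rsum_scal_r. apply rsum_le. intros j Hj.
 rewrite Rabs_mult.
 assert (Hvi : v i * v i <= rsum n (fun k => v k * v k)) by (apply (rsum_term n (fun k => v k * v k)); auto; intros; nra).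
 assert (Hvj : v j * v j <= rsum n (fun k => v k * v k)) by (apply (rsum_term n (fun k => v k * v k)); auto; intros; nra).
 assert (Rabs (v i) * Rabs (v j) <= rsum n (fun k => v k * v k)).
 { assert (Rabs (v i) * Rabs (v j) <= (v i * v i + v j * v j)/2).
   { pose proof (Rabs_pos (v i)). pose proof (Rabs_pos (v j)).
     assert (Rabs (v i) * Rabs (v i) = v i * v i) by (rewrite <- Rabs_mult; apply Rabs_pos_eq; nra).
     assert (Rabs (v j) * Rabs (v j) = v j * v j) by (rewrite <- Rabs_mult; apply Rabs_pos_eq; nra).
     pose proof (Rsqr_pos_lt 1). pose proof (pow2_ge_0 (Rabs (v i) - Rabs (v j))). nra. }
   lra. }
 pose proof (Rabs_pos (A i j)). nra.
Qed.

Lemma dot_self_pos n v i : (i < n)%nat -> v i <> 0 -> 0 < dot n v v.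
Proof. intros Hi Hv. unfold dot. assert (0 < v i * v i) by (apply Rsqr_pos_lt in Hv; exact Hv).
 pose proof (rsum_term n (fun k => v k * v k) i Hi ltac:(intros; nra)). simpl in H0. lra. Qed.

Lemma norm_pos n A x i s : (i < n)%nat -> x i <> 0 -> 0 <= s -> 0 < dot n (Ysol n A x s) (Ysol n A x s).
Proof. intros Hi Hx Hs.
 set (K := Ka n A).
 assert (H := mono_ge (fun s => exp (2 * K * s) * dot n (Ysol n A x s) (Ysol n A x s))
   (fun s => 2 * K * exp (2 * K * s) * dot n (Ysol n A x s) (Ysol n A x s) + exp (2 * K * s) * (2 * dot n (mvec n A (Ysol n A x s)) (Ysol n A x s))) 0 s Hs).
 assert (H0 : exp (2 * K * 0) * dot n (Ysol n A x 0) (Ysol n A x 0) <= exp (2 * K * s) * dot n (Ysol n A x s) (Ysol n A x s)).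
 { apply H.
   - intros r. eapply der_eq. apply der_mult. 2: apply norm_derive.
     apply (is_derive_comp exp (fun r => 2 * K * r)). apply is_derive_exp.
     apply is_derive_scal. apply (is_derive_id (K := R_AbsRing)).
     simpl. unfold scal; simpl. unfold mult; simpl. unfold one; simpl. ring.
   - intros r _. pose proof (exp_pos (2 * K * r)). pose proof (dot_A_bound n A (Ysol n A x r)).
     set (d := dot n (mvec n A (Ysol n A x r)) (Ysol n A x r)) in *.
     set (p := dot n (Ysol n A x r) (Ysol n A x r)) in *.
     pose proof (Rle_abs (- d)) as Hd. rewrite Rabs_Ropp in Hd. cbv beta. fold d p.
     assert (0 <= exp (2 * K * r) * (2 * K * p + 2 * d)) by (apply Rmult_le_pos; [lra|]; unfold K in *; clearbody d p; lra).
     replace (2 * K * exp (2 * K * r) * p + exp (2 * K * r) * (2 * d)) with (exp (2 * K * r) * (2 * K * p + 2 * d)) by ring; auto. }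
 rewrite Rmult_0_r, exp_0, Rmult_1_l in H0.
 assert (Hx0 : dot n (Ysol n A x 0) (Ysol n A x 0) = dot n x x).
 { apply dot_ext; intros; unfold Ysol; apply ysol_0. }
 rewrite Hx0 in H0. pose proof (dot_self_pos n x i Hi Hx). pose proof (exp_pos (2 * K * s)).
 nra.
Qed.

Lemma CL_ext n Q w y z : (forall i, (i < n)%nat -> y i = z i) -> CL n Q w y -> CL n Q w z.
Proof. intros H [H1 H2]. split.
 - rewrite <- (quad_ext n Q y z H). auto.
 - rewrite <- (dot_ext n y z (mvec n Q w) (mvec n Q w) H (fun _ _ => eq_refl)). auto.
Qed.

Lemma quad_Ysol_nonpos n A Q eta x s : nsd n (madd (Mdot n A Q) (mscale (- eta) Q)) ->
  quad n Q x <= 0 -> 0 <= s -> quad n Q (Ysol n A x s) <= 0.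
Proof. intros HN Hq Hs.
 set (f := fun s => quad n Q (Ysol n A x s)).
 assert (H := mono_le (fun s => exp (- eta * s) * f s)
   (fun s => - eta * exp (- eta * s) * f s + exp (- eta * s) * quad n (Mdot n A Q) (Ysol n A x s)) 0 s Hs).
 assert (H0 : exp (- eta * s) * f s <= exp (- eta * 0) * f 0).
 { apply H.
   - intros r. eapply der_eq. apply der_mult. 2: apply quad_derive.
     apply (is_derive_comp exp (fun r => - eta * r)). apply is_derive_exp.
     apply is_derive_scal. apply (is_derive_id (K := R_AbsRing)).
     simpl. unfold scal; simpl. unfold mult; simpl. unfold one; simpl. unfold f. ring.
   - intros r _. cbv beta. pose proof (exp_pos (- eta * r)). specialize (HN (Ysol n A x r)).
     rewrite quad_madd, quad_mscale in HN. unfold f.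
     assert (0 <= exp (- eta * r) * - (quad n (Mdot n A Q) (Ysol n A x r) + - eta * quad n Q (Ysol n A x r))) by (apply Rmult_le_pos; lra).
     lra. }
 rewrite Rmult_0_r, exp_0, Rmult_1_l in H0.
 assert (f 0 = quad n Q x). { unfold f. apply quad_ext. intros; unfold Ysol; apply ysol_0. }
 pose proof (exp_pos (- eta * s)). fold (f s). nra.
Qed.

Lemma forward n Q A lam u eta : (1 <= n)%nat -> lorentz_eigen n Q lam u ->
  nsd n (madd (Mdot n A Q) (mscale (- eta) Q)) -> invariant_cont n A (CL n Q (u (n - 1)%nat)).
Proof. intros Hn HE HN t Ht E HEx x [Hq Hd].
 set (w := mvec n Q (u (n-1)%nat)).
 destruct (classic (exists i, (i < n)%nat /\ x i <> 0)) as [[i0 [Hi0 Hx0]] | Hz].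
 2:{ assert (Hz' : forall i, (i < n)%nat -> x i = 0).
     { intros i Hi. destruct (Req_dec (x i) 0); auto. exfalso; apply Hz; eauto. }
     apply (CL_ext n Q _ (fun _ => 0)).
     - intros i Hi. unfold mvec. symmetry. apply rsum_zero. intros; rewrite Hz'; auto; ring.
     - split. unfold quad, dot. rewrite rsum_zero; [lra|]. intros; ring.
       unfold dot. rewrite rsum_zero; [lra|]. intros; ring. }
 apply (CL_ext n Q _ (Ysol n A x t)).
 { intros i Hi. unfold Ysol. symmetry. apply expm_link; auto. }
 split. { apply (quad_Ysol_nonpos n A Q eta); auto. }
 set (r := fun s => dot n (Ysol n A x s) w).
 assert (Hr0 : r 0 < 0).
 { assert (r 0 = dot n x w). { unfold r. apply dot_ext; auto. intros; unfold Ysol; apply ysol_0. }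
   rewrite H. destruct (Rle_lt_or_eq_dec _ _ Hd); auto. exfalso.
   apply Hx0. apply (key_lemma n Q lam u HE x Hn Hq e i0 Hi0). }
 fold (r t). apply Rnot_lt_le. intros Hrt.
 assert (Hcont : continuity r).
 { intros s. eapply deriv_cont. unfold r.
   apply (dot_derive n (Ysol n A x) (fun _ => w) (mvec n A (Ysol n A x s)) (fun _ => 0)). apply Ysol_derive.
   intros; eapply der_eq; [apply (is_derive_const (K := R_AbsRing)) | reflexivity]. }
 assert (Ht0 : 0 < t).
 { destruct Ht as [Ht'|Ht']; auto. exfalso. rewrite <- Ht' in Hrt. exact (Rlt_asym _ _ Hr0 Hrt). }
 destruct (IVT r 0 t Hcont Ht0 Hr0 Hrt) as [z [Hz Hrz]].
 assert (Hq' : quad n Q (Ysol n A x z) <= 0) by (apply (quad_Ysol_nonpos n A Q eta); auto; lra).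
 pose proof (key_lemma n Q lam u HE (Ysol n A x z) Hn Hq' Hrz) as K.
 pose proof (norm_pos n A x i0 z Hi0 Hx0 ltac:(lra)) as P.
 unfold dot in P. rewrite rsum_zero in P. lra. intros i Hi. rewrite K; auto. ring.
Qed.

Lemma backward_aux n Q A un x : invariant_cont n A (CL n Q un) -> CL n Q un x -> quad n Q x = 0 ->
  quad n (Mdot n A Q) x <= 0.
Proof. intros Hinv Hx Hq0.
 set (f := fun s => quad n Q (Ysol n A x s)).
 assert (Hf : forall s, 0 <= s -> f s <= 0).
 { intros s Hs. destruct (expm_exists n A s) as [E HE].
   destruct (Hinv s Hs E HE x Hx) as [H1 _]. unfold f.
   rewrite <- (quad_ext n Q (mvec n E x)); auto. intros; apply expm_link; auto. }
 assert (Hf0 : f 0 = 0). { unfold f. rewrite <- Hq0 at 2. apply quad_ext. intros; unfold Ysol; apply ysol_0. }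
 assert (Hd : is_derive f 0 (quad n (Mdot n A Q) x)).
 { eapply der_eq. apply quad_derive. apply quad_ext. intros; unfold Ysol; apply ysol_0. }
 apply is_derive_Reals in Hd.
 apply Rnot_lt_le. intros Hpos.
 destruct (Hd _ Hpos) as [del Hdel].
 assert (Hh : del / 2 <> 0) by (pose proof (cond_pos del); lra).
 assert (Hh2 : Rabs (del / 2) < del) by (pose proof (cond_pos del); rewrite Rabs_pos_eq; lra).
 specialize (Hdel _ Hh Hh2). rewrite Rplus_0_l, Hf0 in Hdel.
 pose proof (Hf (del / 2) ltac:(pose proof (cond_pos del); lra)).
 apply Rabs_def2 in Hdel. destruct Hdel as [_ Hdel].
 set (h := del / 2) in *. pose proof (cond_pos del).
 assert (E : (f h - 0) / h * h = f h) by (field; auto).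
 assert (Hh0 : 0 < h) by (unfold h; lra).
 set (q := (f h - 0) / h) in *. clearbody q h f.
 assert (Hq : 0 < q) by lra. pose proof (Rmult_lt_0_compat q h Hq Hh0). lra.
Qed.

Lemma backward n Q A un : invariant_cont n A (CL n Q un) ->
  forall x, quad n Q x = 0 -> quad n (Mdot n A Q) x <= 0.
Proof. intros Hinv x Hq.
 destruct (Rle_lt_dec (dot n x (mvec n Q un)) 0) as [Hd | Hd].
 - apply (backward_aux n Q A un x Hinv); auto. split; lra.
 - assert (Hv : forall M, quad n M (vopp x) = quad n M x).
   { intros M. unfold quad, dot, mvec, vopp. apply rsum_ext; intros.
     rewrite (rsum_ext n (fun k => M i k * - x k) (fun k => -1 * (M i k * x k))) by (intros; ring).
     rewrite rsum_scal. ring. }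
   rewrite <- Hv. apply (backward_aux n Q A un (vopp x) Hinv); [|rewrite Hv; auto].
   split. rewrite Hv, Hq; lra.
   unfold dot, vopp. rewrite (rsum_ext n _ (fun i => -1 * (x i * mvec n Q un i))) by (intros; ring).
   rewrite rsum_scal. unfold dot in Hd. lra.
Qed.

Lemma inv_vopp n A S : invariant_cont n A S -> invariant_cont n A (fun x => S (vopp x)) .
Proof. intros H t Ht E HE x Hx.
 specialize (H t Ht E HE (vopp x) Hx).
 replace (vopp (mvec n E x)) with (mvec n E (vopp x)); auto.
 apply functional_extensionality. intros i. unfold vopp, mvec.
 rewrite (rsum_ext n (fun k => E i k * - x k) (fun k => -1 * (E i k * x k))) by (intros; ring).
 rewrite rsum_scal. ring.
Qed.

Lemma vopp_vopp (x : Vec) : vopp (vopp x) = x.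
Proof. apply functional_extensionality; intros; unfold vopp; ring. Qed.

Theorem theorem3p21 (n : nat) (Q A : Mat) (lam : nat -> R) (u : nat -> Vec) :
  (1 <= n)%nat ->
  symmetric n Q ->
  nonsingular n Q ->
  lorentz_eigen n Q lam u ->
  (invariant_cont n A (CL n Q (u (n - 1)%nat)) <->
     exists eta : R,
       nsd n (madd (madd (mmul n (trmx A) Q) (mmul n Q A)) (mscale (- eta) Q))) /\
  (invariant_cont n A (fun x => CL n Q (u (n - 1)%nat) (vopp x)) <->
     exists eta : R,
       nsd n (madd (madd (mmul n (trmx A) Q) (mmul n Q A)) (mscale (- eta) Q))).
Proof.
 intros Hn Hsym Hns HE.
 assert (Main : invariant_cont n A (CL n Q (u (n - 1)%nat)) <->
     exists eta : R,
       nsd n (madd (madd (mmul n (trmx A) Q) (mmul n Q A)) (mscale (- eta) Q))).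
 { split.
   - intros Hinv.
     pose proof HE as [_ [_ [_ [Hpos Hneg]]]].
     destruct (slemma n Q (Mdot n A Q) (u (n - 1)%nat)) as [eta Heta].
     + rewrite (quad_u n Q lam u HE) by lia. auto.
     + apply (backward n Q A (u (n-1)%nat) Hinv).
     + destruct (Nat.eq_dec n 1) as [E1|E1]; [left; auto|right].
       exists (u 0%nat). rewrite (quad_u n Q lam u HE) by lia. apply Hpos. lia.
     + exists eta. intros x. fold (Mdot n A Q). rewrite quad_madd, quad_mscale.
       specialize (Heta x). lra.
   - intros [eta Heta]. apply (forward n Q A lam u eta); auto. }
 split; auto.
 rewrite <- Main. split.
 - intros H. pose proof (inv_vopp n A _ H) as H2.
   intros t Ht E HE' x Hx. specialize (H2 t Ht E HE' x). cbv beta in H2. rewrite !vopp_vopp in H2.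
   apply H2. auto.
 - apply inv_vopp.
Qed.
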